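(* Let $M$ and $M'$ be two stable matchings in an instance $I$ of SPA-S, and let $M^\land$ be the assignment defined from $M,M'$ in the context. If a lecturer $l_k$ is undersubscribed in $M^\land$, then $l_k$ is undersubscribed in both $M$ and $M'$.
   Context: An instance $I$ of SPA-S consists of a finite set $\mathcal{S}$ of students, a finite set $\mathcal{P}$ of projects and a finite set $\mathcal{L}$ of lecturers. Each student $s_i$ ranks a subset $A_i\subseteq\mathcal{P}$ (its acceptable projects) in strict order. Each project is offered by exactly one lecturer; lecturer $l_k$ offers a nonempty set $P_k\subseteq\mathcal{P}$, the $P_k$ partitioning $\mathcal{P}$. Each lecturer $l_k$ ranks in strict order the students who find at least one project of $P_k$ acceptable. Projects have capacities $c_j\in\mathbb{Z}^+$, lecturers have capacities $d_k\in\mathbb{Z}^+$ with $\max\{c_j:p_j\in P_k\}\le d_k\le\sum\{c_j:p_j\in P_k\}$. A pair $(s_i,p_j)$, $p_j$ offered by $l_k$, is acceptable if $p_j\in A_i$ and $s_i$ is on $l_k$'s list. A matching $M$ is a set of acceptable pairs with each student in at most one pair, $|M(p_j)|\le c_j$, $|M(l_k)|\le d_k$, where for an assignment $M$ (a set of acceptable pairs), $M(s_i)$, $M(p_j)$, $M(l_k)$ denote the project of $s_i$, the students assigned to $p_j$, and the students assigned to projects of $l_k$. Undersubscribed/full means fewer than/exactly capacity many assigned students. An acceptable pair $(s_i,p_j)\notin M$ ($p_j$ offered by $l_k$) blocks $M$ if ($s_i$ is unassigned or prefers $p_j$ to $M(s_i)$) and one of: (P1) $p_j$ and $l_k$ undersubscribed;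 (P2) $p_j$ undersubscribed, $l_k$ full, $s_i\in M(l_k)$; (P3) $p_j$ undersubscribed, $l_k$ full, $l_k$ prefers $s_i$ to the worst student of $M(l_k)$; (P4) $p_j$ full and $l_k$ prefers $s_i$ to the worst student of $M(p_j)$. $M$ is stable if it has no blocking pair. Given stable matchings $M,M'$, $M^\land$ is the assignment in which each student unassigned in both $M$ and $M'$ is unassigned, each student assigned to the same project in both is assigned to that project, and every other student is assigned to the better (in her preference) of her projects in $M$ and $M'$. *)

(* Defs.v *)
From mathcomp Require Import all_boot.
Set Implicit Arguments. Unset Strict Implicit. Unset Printing Implicit Defensive.

(* An SPA-S instance over finite types of students S, projects P, lecturers L.
   Strict preference lists are encoded by ranks (smaller rank = more preferred),
   injective on the relevant list. *)
Record SPAS (S P L : finType) := {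
  acc : S -> {set P};
  srank : S -> P -> nat;
  offer : P -> L;
  lrank : L -> S -> nat;
  pcap : P -> nat;
  lcap : L -> nat;
  srank_inj : forall s, {in acc s &, injective (srank s)};
  lrank_inj : forall l,
    {in [pred s | [exists p, (offer p == l) && (p \in acc s)]] &, injective (lrank l)};
  offer_nonempty : forall l, exists p, offer p = l;
  pcap_pos : forall p, 0 < pcap p;
  lcap_pos : forall l, 0 < lcap l;
  lcap_ge : forall p, pcap p <= lcap (offer p);
  lcap_le : forall l, lcap l <= \sum_(p | offer p == l) pcap p
}.

Section Defs.
Variables (S P L : finType) (I : SPAS S P L).

Definition on_list (l : L) (s : S) : bool :=
  [exists p, (offer I p == l) && (p \in acc I s)].

Definition acceptable (s : S) (p : P) : bool :=
  (p \in acc I s) && on_list (offer I p) s.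

Definition Mp (M : {set S * P}) (p : P) : {set S} := [set s | (s, p) \in M].
Definition Ml (M : {set S * P}) (l : L) : {set S} :=
  [set s | [exists p, ((s, p) \in M) && (offer I p == l)]].

Definition is_matching (M : {set S * P}) : Prop :=
  [/\ forall s p, (s, p) \in M -> acceptable s p,
      forall s p q, (s, p) \in M -> (s, q) \in M -> p = q,
      forall p, #|Mp M p| <= pcap I p
    & forall l, #|Ml M l| <= lcap I l].

Definition p_under (M : {set S * P}) (p : P) : bool := #|Mp M p| < pcap I p.
Definition p_full  (M : {set S * P}) (p : P) : bool := #|Mp M p| == pcap I p.
Definition l_under (M : {set S * P}) (l : L) : bool := #|Ml M l| < lcap I l.
Definition l_full  (M : {set S * P}) (l : L) : bool := #|Ml M l| == lcap I l.

(* s is unassigned in M or prefers p to M(s) *)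
Definition wants (M : {set S * P}) (s : S) (p : P) : Prop :=
  forall q, (s, q) \in M -> srank I s p < srank I s q.

Definition prefers_to_worst (l : L) (s : S) (X : {set S}) : Prop :=
  exists2 s', s' \in X & lrank I l s < lrank I l s'.

Definition blocks (M : {set S * P}) (s : S) (p : P) : Prop :=
  let l := offer I p in
  [/\ acceptable s p, (s, p) \notin M, wants M s p &
      [\/ p_under M p /\ l_under M l,
          [/\ p_under M p, l_full M l & s \in Ml M l],
          [/\ p_under M p, l_full M l & prefers_to_worst l s (Ml M l)]
        | p_full M p /\ prefers_to_worst l s (Mp M p)]].

Definition stable (M : {set S * P}) : Prop :=
  is_matching M /\ forall s p, ~ blocks M s p.

(* M^wedge: each student gets the better of her projects in M and M'
   (a project she has in only one of them; none if unassigned in both). *)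
Definition Mwedge (M M' : {set S * P}) : {set S * P} :=
  [set sp | (sp \in M) && [forall q, ((sp.1, q) \in M') ==> (srank I sp.1 sp.2 <= srank I sp.1 q)]
         || (sp \in M') && [forall q, ((sp.1, q) \in M) ==> (srank I sp.1 sp.2 <= srank I sp.1 q)]].

End Defs.

(* Main.v *)
Require Import Defs.
From mathcomp Require Import all_boot.
From mathcomp Require Import zify.
Set Implicit Arguments. Unset Strict Implicit. Unset Printing Implicit Defensive.

Section Proof.
Variables (S P L : finType) (I : SPAS S P L).

Definition Pset (M M' : {set S * P}) : {set S} :=
  [set s | [exists q, ((s, q) \in M') &&
     [forall q', ((s, q') \in M) ==> (srank I s q < srank I s q')]]].

Lemma match_acc M s p : is_matching I M -> (s,p) \in M -> p \in acc I s.
Proof. by case=> h _ _ _ /h /andP[]. Qed.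

Lemma match_accb M s p : is_matching I M -> (s,p) \in M -> acceptable I s p.
Proof. by case=> h _ _ _ /h. Qed.

Lemma match_uniq M s p q : is_matching I M -> (s,p) \in M -> (s,q) \in M -> p = q.
Proof. by case=> _ h _ _; apply: h. Qed.

Lemma sr_inj s p q : p \in acc I s -> q \in acc I s -> srank I s p = srank I s q -> p = q.
Proof. move=> hp hq e; exact: (srank_inj hp hq e). Qed.

Lemma lr_inj l s t q1 q2 : offer I q1 = l -> q1 \in acc I s -> offer I q2 = l -> q2 \in acc I t ->
  lrank I l s = lrank I l t -> s = t.
Proof.
move=> o1 a1 o2 a2 e; apply: (@lrank_inj _ _ _ I l) e.
- by rewrite inE; apply/existsP; exists q1; rewrite o1 eqxx.
- by rewrite inE; apply/existsP; exists q2; rewrite o2 eqxx.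
Qed.

Lemma nonblock M s q : stable I M -> acceptable I s q -> (s,q) \notin M -> wants I M s q ->
  (p_full I M q /\ forall s', s' \in Mp M q -> lrank I (offer I q) s' <= lrank I (offer I q) s) \/
  [/\ p_under I M q, l_full I M (offer I q), s \notin Ml I M (offer I q) &
      forall s', s' \in Ml I M (offer I q) -> lrank I (offer I q) s' <= lrank I (offer I q) s].
Proof.
case=> [[_ _ hp hl] hb] ha hn hw.
have nb := hb s q.
case: (ltnP #|Mp M q| (pcap I q)) => hq.
- right.
  have hlf : l_full I M (offer I q).
    case: (ltnP #|Ml I M (offer I q)| (lcap I (offer I q))) => hl'.
      by exfalso; apply: nb; split=> //; apply: Or41; split.
    by rewrite /l_full eqn_leq hl hl'.
  have hs : s \notin Ml I M (offer I q).
    apply/negP=> hs; apply: nb; split=> //; by apply: Or42; split.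
  split=> // s' hs'; rewrite leqNgt; apply/negP=> hlt.
  by apply: nb; split=> //; apply: Or43; split=> //; exists s'.
- left; split.
    by rewrite /p_full eqn_leq hp hq.
  move=> s' hs'; rewrite leqNgt; apply/negP=> hlt.
  apply: nb; split=> //; apply: Or44; split; [by rewrite /p_full eqn_leq hp hq | by exists s'].
Qed.


Lemma wedge_mem M M' l s : is_matching I M -> is_matching I M' ->
  (s \in Ml I (Mwedge I M M') l) =
  ((s \in Ml I M l) && (s \notin Pset M M')) || ((s \in Ml I M' l) && (s \in Pset M M')).
Proof.
move=> hM hM'.
apply/idP/idP.
- rewrite inE => /existsP[p /andP[hw /eqP hl]].
  move: hw; rewrite inE /= => /orP[/andP[hpM /forallP hall]|/andP[hpM' /forallP hall]].
  + apply/orP; left; apply/andP; split.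
      by rewrite inE; apply/existsP; exists p; rewrite hpM hl eqxx.
    rewrite inE; apply/negP=> /existsP[q /andP[hq /forallP hq2]].
    have := hq2 p; rewrite hpM /= => h1.
    have := hall q; rewrite hq /= => h2.
    by move: (leq_trans h1 h2); rewrite ltnn.
  + case hP: (s \in Pset M M').
      apply/orP; right; rewrite andbT inE; apply/existsP; exists p; by rewrite hpM' hl eqxx.
    apply/orP; left; rewrite andbT.
    move: hP; rewrite inE => /negbT; rewrite negb_exists => /forallP /(_ p).
    rewrite hpM' /= negb_forall => /existsP[q]; rewrite negb_imply -leqNgt => /andP[hqM hle].
    have hq2 := hall q; rewrite hqM /= in hq2.
    have e : p = q.
      apply: sr_inj; [exact: match_acc hM' hpM' | exact: match_acc hM hqM | by apply/eqP; rewrite eqn_leq hle hq2].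
    by rewrite inE; apply/existsP; exists p; rewrite e hqM -e hl eqxx.
- case/orP=> [/andP[] | /andP[]].
  + rewrite inE => /existsP[p /andP[hpM /eqP hl]] hnP.
    rewrite inE; apply/existsP; exists p; rewrite hl eqxx andbT inE /=.
    apply/orP; left; rewrite hpM /=; apply/forallP=> q; apply/implyP=> hq.
    rewrite leqNgt; apply/negP=> hlt; move/negP: hnP; apply.
    rewrite inE; apply/existsP; exists q; rewrite hq /=; apply/forallP=> q'; apply/implyP=> hq'.
    by rewrite -(match_uniq hM hpM hq').
  + rewrite inE => /existsP[p /andP[hpM' /eqP hl]].
    rewrite inE => /existsP[q /andP[hq /forallP hall]].
    have e := match_uniq hM' hpM' hq; subst q.
    rewrite inE; apply/existsP; exists p; rewrite hl eqxx andbT inE /=.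
    apply/orP; right; rewrite hpM' /=; apply/forallP=> q; apply/implyP=> hq'.
    by have := hall q; rewrite hq' /= => /ltnW.
Qed.

Lemma wedge_card M M' l : is_matching I M -> is_matching I M' ->
  #|Ml I (Mwedge I M M') l| + #|Ml I M l :&: Pset M M'| =
  #|Ml I M l| + #|Ml I M' l :&: Pset M M'|.
Proof.
move=> hM hM'.
have -> : Ml I (Mwedge I M M') l = (Ml I M l :\: Pset M M') :|: (Ml I M' l :&: Pset M M').
  by apply/setP=> s; rewrite wedge_mem // in_setU in_setD in_setI andbC.
rewrite cardsU.
have -> : (Ml I M l :\: Pset M M') :&: (Ml I M' l :&: Pset M M') = set0.
  apply/setP=> s; rewrite in_setI in_setD in_setI in_set0.
  by case: (s \in Pset M M'); rewrite ?andbF.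
rewrite cards0 subn0 -(cardsID (Pset M M') (Ml I M l)).
lia.
Qed.

Lemma Mwedge_sym M M' : Mwedge I M M' = Mwedge I M' M.
Proof. by apply/setP=> x; rewrite !inE orbC. Qed.


Lemma Pset_wants M M' s q : is_matching I M' -> s \in Pset M M' -> (s,q) \in M' ->
  wants I M s q /\ (s,q) \notin M.
Proof.
move=> hM' + hsq; rewrite inE => /existsP[q0 /andP[hq0 /forallP hall]].
have e := match_uniq hM' hq0 hsq; subst q0.
split.
  by move=> q' hq'; have := hall q'; rewrite hq'.
by apply/negP=> h; have := hall q; rewrite h /= ltnn.
Qed.

Lemma proj_ineq M M' q : stable I M -> stable I M' ->
  (exists2 s, s \in Pset M M' & (s,q) \in M') -> ~~ p_under I M q ->
  #|Mp M' q :&: Pset M M'| <= #|Mp M q :&: Pset M M'|.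
Proof.
move=> hsM hsM' [s hsP hsq] hnu.
have hM := hsM.1; have hM' := hsM'.1.
have [hw hn] := Pset_wants hM' hsP hsq.
have ha := match_accb hM' hsq.
case: (nonblock hsM ha hn hw) => [[hfull hall]|[hu _ _ _]]; last by rewrite hu in hnu.
have hsub : Mp M q :\: Mp M' q \subset Pset M M'.
  apply/subsetP=> t; rewrite in_setD !inE => /andP[htq' htq].
  apply: contraT => htP.
  have hwt : wants I M' t q.
    move=> q' hq'.
    move: htP; rewrite negb_exists => /forallP /(_ q'); rewrite hq' /= negb_forall.
    case/existsP=> q''; rewrite negb_imply -leqNgt => /andP[hq'' hle].
    have e := match_uniq hM htq hq''; subst q''.
    rewrite ltn_neqAle hle andbT; apply/negP=> /eqP e.
    have e2 : q = q' by apply: sr_inj e; [exact: match_acc hM htq | exact: match_acc hM' hq'].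
    by subst q'; rewrite hq' in htq'.
  have hat := match_accb hM htq.
  have hlt : lrank I (offer I q) t <= lrank I (offer I q) s by apply: hall; rewrite inE.
  have hst : lrank I (offer I q) s <= lrank I (offer I q) t -> False.
    move=> h; have e : s = t.
      apply: (lr_inj (q1:=q) (q2:=q)) => //; [exact: match_acc hM' hsq | exact: match_acc hM htq |].
      by apply/eqP; rewrite eqn_leq h hlt.
    by subst t; rewrite hsq in htq'.
  case: (nonblock hsM' hat htq' hwt) => [[_ hall']|[_ _ _ hall']].
    by exfalso; apply: hst; apply: hall'; rewrite inE.
  exfalso; apply: hst; apply: hall'; rewrite inE; apply/existsP; exists q; by rewrite hsq eqxx.
set A := Mp M q; set B := Mp M' q; set PP := Pset M M'.
have h1 : #|B :&: PP| <= #|B :\: A|.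
  apply: subset_leq_card; apply/subsetP=> u; rewrite !in_setI in_setD => /andP[hu hP].
  rewrite hu andbT; apply/negP=> huA.
  have hu2 : (u, q) \in M' by move: hu; rewrite inE.
  have [_ hn'] := Pset_wants hM' hP hu2.
  by move: huA; rewrite inE (negbTE hn').
have h2 : #|A :\: B| <= #|A :&: PP|.
  apply: subset_leq_card; apply/subsetP=> u hu; rewrite in_setI.
  have huP := subsetP hsub u hu.
  move: hu; rewrite in_setD => /andP[_ huA]; by rewrite huA huP.
have h3 : #|B| <= #|A|.
  by move: hfull; rewrite /p_full => /eqP ->; case: hM' => _ _ ->.
move: h1 h2; rewrite !cardsD (setIC B A).
lia.
Qed.

Lemma card_sum (T : finType) (A : {set T}) : #|A| = \sum_x (x \in A : nat).
Proof. by rewrite -sum1_card big_mkcond /=; apply: eq_bigr => x _; case: (x \in A). Qed.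

Lemma Ml_sum M (F : {set S}) l : is_matching I M ->
  #|Ml I M l :&: F| = \sum_(q | offer I q == l) #|Mp M q :&: F|.
Proof.
move=> hM.
rewrite card_sum.
under [RHS]eq_bigr => q _ do rewrite card_sum.
rewrite exchange_big /=; apply: eq_bigr => s _.
rewrite in_setI.
case hs: (s \in Ml I M l) => /=.
  move: hs; rewrite inE => /existsP[p /andP[hp hl]].
  rewrite (bigD1 p) //= big1 ?addn0.
    by rewrite in_setI inE hp.
  move=> q /andP[_ hqp]; rewrite in_setI inE.
  case hq: ((s,q) \in M) => //=.
  by rewrite (match_uniq hM hp hq) eqxx in hqp.
rewrite big1 // => q /eqP hq; rewrite in_setI inE.
case hsq: ((s,q) \in M) => //=.
by move: hs; rewrite inE => /negbT /existsPn /(_ q); rewrite hsq hq eqxx.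
Qed.


Definition beta M M' l : bool :=
  [exists q, [&& offer I q == l, p_under I M q &
     [exists s, (s \in Pset M M') && ((s,q) \in M')]]].

Lemma bound M M' l : stable I M -> stable I M' -> ~~ beta M M' l ->
  #|Ml I (Mwedge I M M') l| <= #|Ml I M l|.
Proof.
move=> hsM hsM' hb.
have := wedge_card l hsM.1 hsM'.1.
rewrite (Ml_sum _ _ hsM.1) (Ml_sum _ _ hsM'.1).
have : \sum_(q | offer I q == l) #|Mp M' q :&: Pset M M'| <=
       \sum_(q | offer I q == l) #|Mp M q :&: Pset M M'|.
  apply: leq_sum => q /eqP hq.
  case hex: [exists s, (s \in Pset M M') && ((s,q) \in M')].
    apply: proj_ineq => //.
      by case/existsP: hex => s /andP[h1 h2]; exists s.
    apply/negP=> hu; move/negP: hb; apply; apply/existsP; exists q.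
    by rewrite hq eqxx hu hex.
  suff -> : Mp M' q :&: Pset M M' = set0 by rewrite cards0.
  apply/setP=> s; rewrite in_setI in_set0 inE.
  apply/negP=> /andP[h1 h2]; move/negbT/negP: hex; apply; apply/existsP; exists s.
  by rewrite h1 h2.
lia.
Qed.

Lemma beta_prop M M' l : stable I M -> stable I M' -> beta M M' l ->
  l_full I M l /\ ~~ beta M' M l.
Proof.
move=> hsM hsM' /existsP[q /and3P[/eqP hq hu /existsP[s /andP[hsP hsq]]]].
have [hw hn] := Pset_wants hsM'.1 hsP hsq.
case: (nonblock hsM (match_accb hsM'.1 hsq) hn hw) => [[hf _]|[_ hlf hsn hall]].
  by move: hf hu; rewrite /p_full /p_under => /eqP ->; rewrite ltnn.
rewrite hq in hlf hsn hall.
split=> //.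
apply/negP=> /existsP[q' /and3P[/eqP hq' hu' /existsP[t /andP[htP htq]]]].
have [hw' hn'] := Pset_wants hsM.1 htP htq.
case: (nonblock hsM' (match_accb hsM.1 htq) hn' hw') => [[hf _]|[_ _ htn hall']].
  by move: hf hu'; rewrite /p_full /p_under => /eqP ->; rewrite ltnn.
rewrite hq' in htn hall'.
have h1 : lrank I l t <= lrank I l s.
  apply: hall; rewrite inE; apply/existsP; exists q'; by rewrite htq hq' eqxx.
have h2 : lrank I l s <= lrank I l t.
  apply: hall'; rewrite inE; apply/existsP; exists q; by rewrite hsq hq eqxx.
have e : s = t.
  apply: (@lr_inj l s t q q' hq (match_acc hsM'.1 hsq) hq' (match_acc hsM.1 htq)).
  by apply/eqP; rewrite eqn_leq h2 h1.
subst t; move/negP: hsn; apply.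
rewrite inE; apply/existsP; exists q'; by rewrite htq hq' eqxx.
Qed.

Lemma wedge_le M M' l : stable I M -> stable I M' ->
  #|Ml I (Mwedge I M M') l| <= #|Ml I M l|.
Proof.
move=> hsM hsM'.
case hb: (beta M M' l); last by apply: bound => //; rewrite hb.
have [hf hnb] := beta_prop hsM hsM' hb.
rewrite Mwedge_sym.
apply: (leq_trans (bound hsM' hsM hnb)).
move: hf; rewrite /l_full => /eqP ->; by case: hsM'.1.
Qed.

Lemma wedge_sum M M' : stable I M -> stable I M' ->
  \sum_l #|Ml I M l| <= \sum_l #|Ml I (Mwedge I M M') l|.
Proof.
move=> hsM hsM'.
under eq_bigr => l _ do rewrite card_sum.
under [X in _ <= X]eq_bigr => l _ do rewrite card_sum.
rewrite exchange_big [X in _ <= X]exchange_big /=.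
apply: leq_sum => s _.
case hs: [exists p, (s,p) \in M]; last first.
  rewrite big1 // => l _; case hl: (s \in Ml I M l) => //.
  move: hl; rewrite inE => /existsP[p /andP[hp _]].
  by move/negbT/negP: hs; case; apply/existsP; exists p.
case/existsP: hs => p hp.
rewrite (bigD1 (offer I p)) //= big1 ?addn0; last first.
  move=> l hl; case hsl: (s \in Ml I M l) => //.
  move: hsl; rewrite inE => /existsP[p' /andP[hp' /eqP hl']].
  by rewrite -hl' (match_uniq hsM.1 hp hp') eqxx in hl.
have hin : s \in Ml I M (offer I p) by rewrite inE; apply/existsP; exists p; rewrite hp eqxx.
rewrite hin.
have [p0 hp0] : exists p0, (s,p0) \in Mwedge I M M'.
  case hall: [forall q, ((s,q) \in M') ==> (srank I s p <= srank I s q)].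
    by exists p; rewrite inE /= hp hall.
  move/negbT: hall; rewrite negb_forall => /existsP[q]; rewrite negb_imply -ltnNge => /andP[hq hlt].
  exists q; rewrite inE /= hq /=; apply/orP; right; apply/forallP=> q'; apply/implyP=> hq'.
  by rewrite -(match_uniq hsM.1 hp hq') ltnW.
rewrite (bigD1 (offer I p0)) //=.
have -> : s \in Ml I (Mwedge I M M') (offer I p0).
  by rewrite inE; apply/existsP; exists p0; rewrite hp0 eqxx.
by [].
Qed.

Lemma wedge_eq M M' l : stable I M -> stable I M' ->
  #|Ml I (Mwedge I M M') l| = #|Ml I M l|.
Proof.
move=> hsM hsM'.
apply/eqP; rewrite eqn_leq wedge_le //=.
rewrite leqNgt; apply/negP=> hlt.
have := wedge_sum hsM hsM'.
rewrite (bigD1 l) //= [X in _ <= X](bigD1 l) //=.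
have : \sum_(i | i != l) #|Ml I (Mwedge I M M') i| <= \sum_(i | i != l) #|Ml I M i|.
  by apply: leq_sum => i _; apply: wedge_le.
lia.
Qed.

End Proof.

Theorem lemma5 (S P L : finType) (I : SPAS S P L) (M M' : {set S * P}) (l : L) :
  stable I M -> stable I M' ->
  l_under I (Mwedge I M M') l ->
  l_under I M l /\ l_under I M' l.
Proof.
move=> hsM hsM'; rewrite /l_under => h; split.
  by rewrite -(wedge_eq l hsM hsM').
by rewrite -(wedge_eq l hsM' hsM) -Mwedge_sym.
Qed.
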